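(* Let $G$ be a finite simple graph on the vertex set $\{x_1,\ldots,x_n\}$, $n\ge 1$, and let $NI(G)\subseteq R=\mathbf{k}[x_1,\ldots,x_n]$ be its closed neighborhood ideal. Then $\operatorname{pd}(R/NI(G))\geq \gamma'_G$.
   Context: $\mathbf{k}$ is a field and vertices are identified with variables. $N[x_i]=\{x_i\}\cup\{x_j:\{x_i,x_j\}\in E(G)\}$, and $NI(G)=\langle \prod_{x_j\in N[x_i]}x_j : x_i\in V(G)\rangle$. A dominating set is a set $S\subseteq V(G)$ with $S\cap N[x]\ne\emptyset$ for all vertices $x$; it is minimal if no proper subset is dominating. $\gamma'_G$ is the maximum size of a minimal dominating set of $G$. *)

(* Defs.v *)
From HB Require Import structures.
From mathcomp Require Import all_boot all_order all_algebra.
From mathcomp Require Import mpoly.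
Set Implicit Arguments. Unset Strict Implicit. Unset Printing Implicit Defensive.
Import Order.TTheory GRing.Theory.
Local Open Scope ring_scope.

(* A finite simple graph on vertices 'I_n (vertex i <-> variable x_(i+1)):
   a symmetric irreflexive relation. *)
Definition simple_graph (n : nat) (e : rel 'I_n) : Prop :=
  ssrbool.symmetric e /\ ssrbool.irreflexive e.

Definition closed_nbhd (n : nat) (e : rel 'I_n) (x : 'I_n) : {set 'I_n} :=
  [set y | (y == x) || e x y].

Definition dominating (n : nat) (e : rel 'I_n) (S : {set 'I_n}) : bool :=
  [forall x, S :&: closed_nbhd e x != set0].

Definition minimal_dominating (n : nat) (e : rel 'I_n) (S : {set 'I_n}) : bool :=
  dominating e S && [forall T : {set 'I_n}, (T \proper S) ==> ~~ dominating e T].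

Definition gamma' (n : nat) (e : rel 'I_n) : nat :=
  \max_(S : {set 'I_n} | minimal_dominating e S) #|S|.

Definition nbhd_monomial (k : fieldType) (n : nat) (e : rel 'I_n) (i : 'I_n)
  : {mpoly k[n]} := \prod_(j in closed_nbhd e i) 'X_j.

Definition in_ideal_gen (R : comRingType) (m : nat) (g : 'I_m -> R) (f : R) : Prop :=
  exists c : 'I_m -> R, f = \sum_(i < m) c i * g i.

Definition in_NI (k : fieldType) (n : nat) (e : rel 'I_n) (f : {mpoly k[n]}) : Prop :=
  in_ideal_gen (nbhd_monomial k e) f.

(* A finite free resolution of R/I of length p over R:
     0 -> F_p -> ... -> F_1 -> F_0 -> R/I -> 0,   F_i = R^(b i),
   maps acting on row vectors: d i : F_(i+1) -> F_i is v |-> v *m d i,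
   F_0 -> R/I is v |-> (v *m aug) mod I (aug a column of lifts in R).
   We require b j = 0 for j > p, exactness at every F_i, and surjectivity
   onto R/I.  (Exactness at F_p with F_(p+1) = 0 is injectivity of d (p-1).) *)
Definition free_resolution_of_length (R : comRingType) (I : R -> Prop) (p : nat)
  : Prop :=
  exists (b : nat -> nat) (d : forall i : nat, 'M[R]_(b i.+1, b i))
         (aug : 'cV[R]_(b 0)),
    [/\ (forall j, p < j -> b j = 0)%N,
        (exists v : 'rV[R]_(b 0), I ((v *m aug) 0 0 - 1)),
        (forall v : 'rV[R]_(b 0),
            I ((v *m aug) 0 0) <-> exists w : 'rV[R]_(b 1), v = w *m d 0) &
        (forall (i : nat) (v : 'rV[R]_(b i.+1)),
            v *m d i = 0 <-> exists w : 'rV[R]_(b i.+2), v = w *m d i.+1)].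

(* Main.v *)
Require Import Defs.
From HB Require Import structures.
From mathcomp Require Import all_boot all_order all_algebra.
From mathcomp Require Import mpoly.
Local Open Scope ring_scope.

Module Helpers.
Set Implicit Arguments. Unset Strict Implicit. Unset Printing Implicit Defensive.
Import Order.TTheory GRing.Theory.

Section Core.
Variable R : comPzRingType.

Record ideal (Q : R -> Prop) := Ideal {
  Q0 : Q 0; QD : forall a b, Q a -> Q b -> Q (a + b);
  QM : forall a b, Q b -> Q (a * b) }.

Definition QV (Q : R -> Prop) k (v : 'rV[R]_k) := forall j, Q (v 0 j).

Variable Q : R -> Prop.
Hypothesis iQ : ideal Q.

Lemma QN a : Q a -> Q (- a).
Proof. by move=> h; rewrite -mulN1r; apply: (QM iQ). Qed.

Lemma QVD k (v w : 'rV[R]_k) : QV Q v -> QV Q w -> QV Q (v + w).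
Proof. by move=> hv hw j; rewrite mxE; apply: (QD iQ). Qed.

Lemma QVN k (v : 'rV[R]_k) : QV Q v -> QV Q (- v).
Proof. by move=> hv j; rewrite mxE; apply: QN. Qed.

Lemma QVB k (v w : 'rV[R]_k) : QV Q v -> QV Q w -> QV Q (v - w).
Proof. by move=> hv hw; apply: QVD => //; apply: QVN. Qed.

Lemma QVZ k a (v : 'rV[R]_k) : QV Q v -> QV Q (a *: v).
Proof. by move=> hv j; rewrite mxE; apply: (QM iQ). Qed.

Lemma QVM k l (v : 'rV[R]_k) (M : 'M[R]_(k, l)) : QV Q v -> QV Q (v *m M).
Proof.
move=> hv j; rewrite mxE; apply: (big_ind Q (Q0 iQ) (QD iQ)) => i _.
by rewrite mulrC; apply: (QM iQ).
Qed.

Lemma QV0 k : QV Q (0 : 'rV[R]_k).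
Proof. by move=> j; rewrite mxE; apply: (Q0 iQ). Qed.

End Core.

Fixpoint regseq (R : comPzRingType) (Q : R -> Prop) (ys : seq R) : Prop :=
  match ys with
  | [::] => True
  | y :: ys' => (forall r, Q (y * r) -> Q r) /\
      exists Q' : R -> Prop, [/\ ideal Q', (forall r, Q r -> Q' r),
         (forall r, Q' (y * r)), (forall r, Q' r -> exists a, Q (r - y * a))
         & regseq Q' ys']
  end.

Lemma QVdec (R : comPzRingType) (Q Q' : R -> Prop) y k (x : 'rV[R]_k) :
  (forall r, Q' r -> exists a, Q (r - y * a)) -> QV Q' x ->
  exists z : 'rV[R]_k, QV Q (x - y *: z).
Proof.
move=> dec hx.
have /fin_all_exists[f hf] : forall j, exists a, Q (x 0 j - y * a).
  by move=> j; apply: dec.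
by exists (\row_j f j) => j; rewrite !mxE.
Qed.

Lemma QVreg (R : comPzRingType) (Q : R -> Prop) y k (x : 'rV[R]_k) :
  (forall r, Q (y * r) -> Q r) -> QV Q (y *: x) -> QV Q x.
Proof. by move=> reg h j; apply: reg; have := h j; rewrite mxE. Qed.

Lemma QVlift (R : comPzRingType) (Q Q' : R -> Prop) k (x : 'rV[R]_k) :
  (forall r, Q r -> Q' r) -> QV Q x -> QV Q' x.
Proof. by move=> h hx j; apply: h. Qed.

Lemma QVy (R : comPzRingType) (Q' : R -> Prop) y k (x : 'rV[R]_k) :
  (forall r, Q' (y * r)) -> QV Q' (y *: x).
Proof. by move=> h j; rewrite mxE. Qed.

Lemma core (R : comPzRingType) (ys : seq R) : forall (Q : R -> Prop),
  ideal Q -> regseq Q ys ->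
  forall (b : nat -> nat) (d : forall i, 'M[R]_(b i.+1, b i)),
  (forall i (w : 'rV[R]_(b i.+2)), w *m d i.+1 *m d i = 0) ->
  (forall i (v : 'rV[R]_(b i.+1)), QV Q (v *m d i) ->
       exists w : 'rV[R]_(b i.+2), QV Q (v - w *m d i.+1)) ->
  forall u : 'rV[R]_(b 0),
  (forall y, y \in ys -> exists w : 'rV[R]_(b 1), QV Q (y *: u - w *m d 0)) ->
  ~ (exists w : 'rV[R]_(b 1), QV Q (u - w *m d 0)) ->
  (0 < b (size ys))%N.
Proof.
elim: ys => [|y ys IH] Q iQ /= reg b d cplx ex u hy hu.
  rewrite lt0n; apply/negP => /eqP b0; apply: hu; exists 0 => j; exfalso.
  by case: j => j hj; rewrite b0 in hj.
case: reg => yreg [Q' [iQ' QQ' Qy dec reg']].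
have [w hw] := hy y (mem_head _ _).
apply: (IH Q' iQ' reg' (fun i => b i.+1) (fun i => d i.+1) _ _ w).
- by move=> i w'; apply: cplx.
- move=> i v /= hv.
  have [z hz] := QVdec dec hv.
  have hzd : QV Q (z *m d i).
    apply: (QVreg yreg); rewrite scalemxAl.
    have -> : (y *: z) *m d i = - ((v *m d i.+1 - y *: z) *m d i).
      by rewrite mulmxBl cplx sub0r opprK.
    by apply: QVN => //; apply: QVM.
  have [t ht] := ex i z hzd.
  have [s hs] : exists s : 'rV[R]_(b i.+3), QV Q ((v - y *: t) - s *m d i.+2).
    apply: ex; have -> : (v - y *: t) *m d i.+1 =
        (v *m d i.+1 - y *: z) + y *: (z - t *m d i.+1).
      by rewrite mulmxBl -scalemxAl scalerBr addrA subrK.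
    by apply: QVD => //; apply: QVZ.
  exists s; have -> : v - s *m d i.+2 = ((v - y *: t) - s *m d i.+2) + y *: t.
    by rewrite addrAC subrK.
  by apply: QVD => //; [apply: (QVlift QQ') | apply: QVy].
- move=> y' hy'; have [w' hw'] := hy y' ltac:(by rewrite inE hy' orbT).
  have [t ht] : exists t : 'rV[R]_(b 2), QV Q ((y' *: w - y *: w') - t *m d 1).
    apply: ex; have -> : (y' *: w - y *: w') *m d 0 =
       y *: (y' *: u - w' *m d 0) - y' *: (y *: u - w *m d 0).
      rewrite mulmxBl -!scalemxAl !scalerBr !scalerA mulrC.
      by rewrite opprB [RHS]addrC addrA subrK.
    by apply: QVB => //; apply: QVZ.
  exists t; have -> : y' *: w - t *m d 1 = ((y' *: w - y *: w') - t *m d 1) + y *: w'.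
    by rewrite addrAC subrK.
  by apply: QVD => //; [apply: (QVlift QQ') | apply: QVy].
- move=> [t ht]; have [z hz] := QVdec dec ht.
  apply: hu; exists z; apply: (QVreg yreg).
  have -> : y *: (u - z *m d 0) =
      (y *: u - w *m d 0) + (w - t *m d 1 - y *: z) *m d 0.
    rewrite !mulmxBl cplx subr0 -scalemxAl scalerBr.
    by rewrite addrA subrK.
  by apply: QVD => //; apply: QVM.
Qed.

Section MP.
Variables (k : fieldType) (n : nat).
Local Notation P := {mpoly k[n]}.

Definition QA (A : seq 'I_n) (r : P) : Prop :=
  forall m : 'X_{1..n}, (forall a, a \in A -> m a = 0%N) -> r@_m = 0.

Lemma QA_ideal A : ideal (QA A).
Proof.
split.
- by move=> m _; rewrite mcoeff0.
- by move=> a b ha hb m hm; rewrite mcoeffD ha ?hb ?addr0.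
- move=> a b hb m hm; rewrite mcoeffM big1 // => kk /eqP hk.
  rewrite hb ?mulr0 // => x hx; have := hm x hx.
  have /= -> := congr1 (fun mm : 'X_{1..n} => mm x) hk; rewrite mnmDE.
  by move/eqP; rewrite addn_eq0 => /andP[_ /eqP].
Qed.

Lemma QA_reg A i r : i \notin A -> QA A ('X_i * r) -> QA A r.
Proof.
move=> iA h m hm; rewrite -(mcoeffMX r U_(i) m) mulrC; apply: h => a ha.
rewrite mnmDE mnm1E hm // addn0; case: eqP => // E.
by rewrite E ha in iA.
Qed.

Lemma QA_y A i r : QA (i :: A) ('X_i * r).
Proof.
move=> m hm; rewrite mcoeffM big1 // => kk /eqP hk.
rewrite mcoeffX; case: eqP => [E|]; last by rewrite mul0r.
have := hm i (mem_head _ _).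
have /= -> := congr1 (fun mm : 'X_{1..n} => mm i) hk.
by rewrite mnmDE -E mnm1E eqxx.
Qed.

Lemma QA_dec A i r : QA (i :: A) r -> exists a, QA A (r - 'X_i * a).
Proof.
move=> h.
exists (\sum_(m <- msupp r | (0 < m i)%N) r@_m *: 'X_[m - U_(i)]).
have E : 'X_i * (\sum_(m <- msupp r | (0 < m i)%N) r@_m *: 'X_[m - U_(i)])
   = \sum_(m <- msupp r | (0 < m i)%N) r@_m *: 'X_[m].
  rewrite mulr_sumr; apply: eq_bigr => m hm.
  rewrite -scalerAr -mpolyXD addmC submK //.
  apply/mnm_lepP => j; rewrite mnm1E; case: eqP => [<-|] //.
rewrite E {1}(mpolyE r) (bigID (fun m : 'X_{1..n} => (0 < m i)%N)) /= addrAC subrr add0r.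
move=> m' hm'; rewrite raddf_sum /= big1_seq // => m /andP[hi _].
rewrite mcoeffZ mcoeffX; case: eqP => [E'|]; last by rewrite mulr0.
rewrite E' h ?mul0r // => a; rewrite inE => /orP[/eqP ->|]; last exact: hm'.
by move: hi; rewrite E' lt0n negbK => /eqP.
Qed.

Lemma QA_regseq (s : seq 'I_n) : forall A, uniq s -> (forall j, j \in s -> j \notin A) ->
  regseq (QA A) [seq 'X_j | j <- s].
Proof.
elim: s => [|i s IH] A //= /andP[iNs us] hA; split.
  by move=> r; apply: QA_reg; apply: hA; rewrite mem_head.
exists (QA (i :: A)); split.
- exact: QA_ideal.
- by move=> r h m hm; apply: h => a ha; apply: hm; rewrite inE ha orbT.
- by move=> r; apply: QA_y.
- by move=> r; apply: QA_dec.
- apply: IH => // j hj; rewrite inE negb_or hA ?inE ?hj ?orbT // andbT.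
  by apply/eqP => E; move: hj; rewrite E (negbTE iNs).
Qed.

Lemma QA_nil r : QA [::] r <-> r = 0.
Proof.
split; last by move=> -> m _; rewrite mcoeff0.
by move=> h; apply/mpolyP => m; rewrite mcoeff0 h.
Qed.

Lemma coefMX_out (c : P) m m' : ~~ (m <= m')%MM -> (c * 'X_[m])@_m' = 0.
Proof.
move=> hle; rewrite mcoeffM big1 // => kk /eqP hk.
rewrite mcoeffX; case: eqP => [E|]; last by rewrite mulr0.
exfalso; move/negP: hle; apply.
apply/mnm_lepP => j; have /= -> := congr1 (fun mm : 'X_{1..n} => mm j) hk.
by rewrite mnmDE -E leq_addl.
Qed.

Lemma mnm_sum_ind (A : {set 'I_n}) j : (\sum_(x in A) U_(x))%MM j = (j \in A).
Proof.
rewrite mnm_sumE; case: (boolP (j \in A)) => hj.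
  rewrite (bigD1 j) //= mnm1E eqxx big1 // => x /andP[_ hx].
  by rewrite mnm1E (negbTE hx).
by rewrite big1 // => x hx; rewrite mnm1E; case: eqP => // E; move: hj; rewrite -E hx.
Qed.

Lemma prodX (A : {set 'I_n}) : \prod_(j in A) ('X_j : P) = 'X_[\sum_(x in A) U_(x)].
Proof.
by rewrite (big_morph (fun m => ('X_[m] : P)) (@mpolyXD _ _) (@mpolyX0 _ _)).
Qed.

End MP.

Section Main.
Variables (k : fieldType) (n : nat) (e : rel 'I_n).
Local Notation P := {mpoly k[n]}.

Lemma NI_add (f h : P) : in_NI e f -> in_NI e h -> in_NI e (f + h).
Proof.
move=> [c1 ->] [c2 ->]; exists (fun i => c1 i + c2 i).
by rewrite -big_split; apply: eq_bigr => i _; rewrite mulrDl.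
Qed.

Lemma NI_mul (a f : P) : in_NI e f -> in_NI e (a * f).
Proof.
move=> [c ->]; exists (fun i => a * c i).
by rewrite mulr_sumr; apply: eq_bigr => i _; rewrite mulrA.
Qed.

Lemma NI_gen x : in_NI e (nbhd_monomial k e x).
Proof.
exists (fun i => (i == x)%:R); rewrite (bigD1 x) //= eqxx mul1r big1 ?addr0 //.
by move=> i /negbTE ->; rewrite mul0r.
Qed.

Definition mN x : 'X_{1..n} := (\sum_(j in closed_nbhd e x) U_(j))%MM.
Definition mT (S : {set 'I_n}) : 'X_{1..n} := [multinom (j \notin S : nat) | j < n].

Lemma gE x : nbhd_monomial k e x = 'X_[mN x].
Proof. by rewrite /nbhd_monomial prodX. Qed.

Lemma notNI S : dominating e S -> ~ in_NI e ('X_[mT S] : P).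
Proof.
move=> dom [c hc].
have H0 i : (c i * nbhd_monomial k e i)@_(mT S) = 0.
  rewrite gE coefMX_out //.
have /set0Pn [j] := forallP dom i; rewrite !inE => /andP[hjS hjN].
apply/negP => /mnm_lepP /(_ j); rewrite mnm_sum_ind mnmE.
by rewrite hjS inE hjN.
have := congr1 (mcoeff (mT S)) hc.
rewrite mcoeffX eqxx raddf_sum big1 //= => /eqP; by rewrite oner_eq0.
Qed.

Lemma inNI S s : minimal_dominating e S -> s \in S ->
  in_NI e ('X_s * 'X_[mT S] : P).
Proof.
case/andP => dom /forallP min hs.
have := min (S :\ s); rewrite properD1 //= => /forallPn [x]; rewrite negbK => /eqP hx.
have le : (mN x <= U_(s) + mT S)%MM.
  apply/mnm_lepP => j; rewrite mnm_sum_ind mnmDE mnm1E mnmE.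
  case hjN: (j \in closed_nbhd e x) => //=.
  case hjS: (j \in S) => /=; last by rewrite addn1.
  case: (eqVneq s j) => // hsj.
  have : j \in (S :\ s) :&: closed_nbhd e x by rewrite in_setI in_setD1 hjS hjN eq_sym hsj.
  by rewrite hx inE.
rewrite -mpolyXD -(submK le) mpolyXD -gE.
by apply: NI_mul; apply: NI_gen.
Qed.

End Main.

Lemma QV_nil (k : fieldType) (n : nat) l (x : 'rV[{mpoly k[n]}]_l) :
  QV (@QA k n [::]) x -> x = 0.
Proof. by move=> h; apply/rowP => j; rewrite mxE; apply/QA_nil; apply: h. Qed.

End Helpers.
Import Helpers.
Import GRing.Theory.

Theorem corollary2p4 (k : fieldType) (n : nat) (e : rel 'I_n) :
  (0 < n)%N -> simple_graph e ->
  forall p : nat,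
    free_resolution_of_length (@in_NI k n e) p -> (gamma' e <= p)%N.
Proof.
move=> _ _ p [b [d [aug [Hb [v0 hv0] Hex0 Hex]]]].
apply/bigmax_leqP => S HS.
have dom : dominating e S := (andP HS).1.
suff : (0 < b #|S|)%N.
  by move=> hb; rewrite leqNgt; apply/negP => hp; rewrite Hb in hb.
have -> : #|S| = size [seq ('X_j : {mpoly k[n]}) | j <- enum S].
  by rewrite size_map cardE.
apply: (@core _ [seq 'X_j | j <- enum S] (@QA k n [::]) (QA_ideal k [::])
   (@QA_regseq k n (enum S) [::] (enum_uniq _) (fun _ _ => isT)) b d
          _ _ ('X_[mT S] *: v0)).
- by move=> i w; apply/(Hex i _).2; exists w.
- move=> i v /QV_nil hv; have [w hw] := (Hex i v).1 hv.
  by exists w; rewrite hw subrr; apply: QV0; apply: QA_ideal.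
- move=> y /mapP [s hs ->]; rewrite mem_enum in hs.
  have : in_NI e ((('X_s *: ('X_[mT S] *: v0)) *m aug) 0 0).
    rewrite scalerA -scalemxAl mxE.
    have -> : 'X_s * 'X_[mT S] * (v0 *m aug) 0 0 =
      'X_s * 'X_[mT S] * ((v0 *m aug) 0 0 - 1) + 'X_s * 'X_[mT S].
      by rewrite mulrBr mulr1 subrK.
    by apply: NI_add; [apply: NI_mul | apply: inNI].
  move/(Hex0 _).1 => [w hw]; exists w; rewrite hw subrr.
  by apply: QV0; apply: QA_ideal.
- move=> [w /QV_nil /eqP]; rewrite subr_eq0 => /eqP hu.
  have := (Hex0 _).2 (ex_intro _ w hu); rewrite -scalemxAl mxE => h.
  apply: (@notNI k n e S dom).
  have <- : 'X_[mT S] * (v0 *m aug) 0 0 + (-1) * ('X_[mT S] * ((v0 *m aug) 0 0 - 1))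
     = 'X_[mT S].
    by rewrite mulN1r mulrBr mulr1 opprB addrC subrK.
  by apply: NI_add => //; apply: NI_mul; apply: NI_mul.
Qed.
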